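(* Let $I\subset S=K[x_1,\dots,x_t]$ be a nonzero proper monomial ideal. Then there exist positive integers $n_0$ and $d$ such that $v(I^{n+1})\le n\,\alpha(I)+d$ for all $n\ge n_0$.
   Context: $K$ is a field and $S$ is standard graded. For a proper graded ideal $J$, the $v$-number is $v(J)=\min\{k\ge 0 : \exists f\in S_k,\ \mathcal P\in\operatorname{Ass}(S/J) \text{ with } (J:f)=\mathcal P\}$. For a nonzero graded ideal $I$, $\alpha(I)=\min\{\deg f : f\in I\setminus\{0\} \text{ homogeneous}\}$. *)

(* Defs.v *)
From Stdlib Require Import ClassicalEpsilon.
From mathcomp Require Import all_boot all_algebra.
From mathcomp Require Import mpoly.

Set Implicit Arguments.
Unset Strict Implicit.
Unset Printing Implicit Defensive.

Import GRing.Theory.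
Local Open Scope ring_scope.

Definition asb (Q : Prop) : bool :=
  if excluded_middle_informative Q then true else false.

Lemma asbP (Q : Prop) : asb Q <-> Q.
Proof. by rewrite /asb; case: excluded_middle_informative. Qed.

(* min { k | P k }, with the (irrelevant) convention 0 when no such k exists *)
Definition min_nat (P : nat -> Prop) : nat :=
  match excluded_middle_informative (exists k, P k) with
  | left h =>
      let h' : exists k, asb (P k) :=
        match h with ex_intro k hk => ex_intro _ k (proj2 (asbP (P k)) hk) end in
      ex_minn h'
  | right _ => 0%N
  end.

Section Ideals.
Variables (K : fieldType) (t : nat).
Local Notation S := {mpoly K[t]}.

Definition ideal_gen (G : S -> Prop) (f : S) : Prop :=
  exists s : seq (S * S), {in s, forall x, G x.2} /\ f = \sum_(x <- s) x.1 * x.2.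

Definition is_ideal (I : S -> Prop) : Prop :=
  [/\ I 0, (forall a b, I a -> I b -> I (a + b)) & (forall r a, I a -> I (r * a))].

Definition monomial_ideal (I : S -> Prop) : Prop :=
  exists M : 'X_{1..t} -> Prop,
    forall f, I f <-> ideal_gen (fun g => exists m, M m /\ g = 'X_[m]) f.

Definition ideal_pow (I : S -> Prop) (n : nat) : S -> Prop :=
  ideal_gen (fun g => exists s : seq S,
     [/\ size s = n, {in s, forall x, I x} & g = \prod_(x <- s) x]).

Definition colon (J : S -> Prop) (f : S) : S -> Prop := fun g => J (g * f).

Definition prime_ideal (P : S -> Prop) : Prop :=
  [/\ is_ideal P, ~ P 1 & forall a b, P (a * b) -> P a \/ P b].

(* associated primes of S/J : primes of the form (J : g) *)
Definition Ass (J : S -> Prop) (P : S -> Prop) : Prop :=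
  prime_ideal P /\ exists g : S, forall x, P x <-> colon J g x.

Definition v_number (J : S -> Prop) : nat :=
  min_nat (fun k => exists f : S, f \is k.-homog /\
             exists P, Ass J P /\ forall x, colon J f x <-> P x).

Definition alpha (I : S -> Prop) : nat :=
  min_nat (fun k => exists f : S, [/\ I f, f != 0 & f \is k.-homog]).

End Ideals.

(* Main.v *)
Require Import Defs.
From Stdlib Require Import ClassicalEpsilon Classical.
From mathcomp Require Import all_boot all_algebra.
From mathcomp Require Import mpoly.
From mathcomp Require Import zify ring.
From Stdlib Require Import Lia.
Set Implicit Arguments.
Unset Strict Implicit.
Unset Printing Implicit Defensive.
Import GRing.Theory.
Local Open Scope ring_scope.

Lemma min_natP (P : nat -> Prop) k : P k -> P (min_nat P) /\ (min_nat P <= k)%N.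
Proof.
move=> Pk; rewrite /min_nat; case: excluded_middle_informative => [h|nh]; last first.
  by exfalso; apply: nh; exists k.
case: ex_minnP => m Hm Hmin; split; first by apply/asbP.
by apply: Hmin; apply/asbP.
Qed.

Section S.
Variables (K : fieldType) (t : nat).
Local Notation S := {mpoly K[t]}.
Local Notation M := 'X_{1..t}.
Implicit Types (G : S -> Prop).

Lemma ig0 G : ideal_gen G 0.
Proof. by exists [::]; rewrite big_nil. Qed.

Lemma igD G a b : ideal_gen G a -> ideal_gen G b -> ideal_gen G (a + b).
Proof.
move=> [s1 [H1 ->]] [s2 [H2 ->]]; exists (s1 ++ s2); split; last by rewrite big_cat.
by move=> x; rewrite mem_cat => /orP [/H1|/H2].
Qed.

Lemma igM G r a : ideal_gen G a -> ideal_gen G (r * a).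
Proof.
move=> [s [H ->]]; exists [seq (r * x.1, x.2) | x <- s]; split.
  by move=> x /mapP [y /H Hy ->].
by rewrite big_map big_distrr /=; apply: eq_bigr => x _; rewrite mulrA.
Qed.

Lemma igG G g : G g -> ideal_gen G g.
Proof. by move=> Gg; exists [:: (1, g)]; split; [move=> x; rewrite inE => /eqP ->|rewrite big_seq1 mul1r]. Qed.

Lemma ig_sum G (T : Type) (s : seq T) (F : T -> S) :
  (forall x, ideal_gen G (F x)) -> ideal_gen G (\sum_(x <- s) F x).
Proof.
move=> H; elim: s => [|x s IH]; first by rewrite big_nil; apply: ig0.
by rewrite big_cons; apply: igD.
Qed.

Definition supp_in (E : M -> Prop) (p : S) := forall m, m \in msupp p -> E m.
Definition upc (E : M -> Prop) := forall m b, E m -> E (b + m)%MM.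

Lemma supp_in0 E : supp_in E 0.
Proof. by move=> m; rewrite -mpolyC0 msupp0. Qed.

Lemma supp_inD E p q : supp_in E p -> supp_in E q -> supp_in E (p + q).
Proof. by move=> Hp Hq m /msuppD_le; rewrite mem_cat => /orP [/Hp|/Hq]. Qed.

Lemma supp_inN E p : supp_in E p -> supp_in E (- p).
Proof. by move=> Hp m; rewrite (perm_mem (msuppN p)) => /Hp. Qed.

Lemma supp_inM (E1 E2 E : M -> Prop) p q :
  (forall m1 m2, E1 m1 -> E2 m2 -> E (m1 + m2)%MM) ->
  supp_in E1 p -> supp_in E2 q -> supp_in E (p * q).
Proof.
move=> HE Hp Hq m /msuppM_le /allpairsP [[m1 m2] /= [h1 h2 ->]].
by apply: HE; [apply: Hp|apply: Hq].
Qed.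

Lemma supp_inMl E r p : upc E -> supp_in E p -> supp_in E (r * p).
Proof.
move=> hE Hp; apply: (@supp_inM (fun _ => True) E) => //.
by move=> m1 m2 _ H2; apply: hE.
Qed.

Lemma supp_inX E m : E m -> supp_in E 'X_[m].
Proof. by move=> Em m'; rewrite msuppX inE => /eqP ->. Qed.

Lemma supp_inZ E c p : supp_in E p -> supp_in E (c *: p).
Proof. by move=> H m /msuppZ_le /H. Qed.

Lemma supp_in_sum E (T : Type) (s : seq T) (P : pred T) (F : T -> S) :
  (forall x, P x -> supp_in E (F x)) -> supp_in E (\sum_(x <- s | P x) F x).
Proof.
move=> H; elim: s => [|x s IH]; first by rewrite big_nil; apply: supp_in0.
by rewrite big_cons; case: ifP => Px //; apply: supp_inD => //; apply: H.
Qed.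

Lemma supp_in_ig E G p : upc E -> (forall g, G g -> supp_in E g) ->
  ideal_gen G p -> supp_in E p.
Proof.
move=> hE hG [s [Hs ->]]; rewrite big_seq; apply: supp_in_sum => x xs.
by apply: supp_inMl => //; apply: hG; apply: Hs.
Qed.

Lemma ig_mono_supp (Gm : M -> Prop) p :
  ideal_gen (fun g => exists a, Gm a /\ g = 'X_[a]) p ->
  supp_in (fun m => exists a b, Gm a /\ m = (b + a)%MM) p.
Proof.
apply: supp_in_ig.
  by move=> m b [a [b' [Ha ->]]]; exists a, (b + b')%MM; rewrite addmA.
move=> g [a [Ha ->]]; apply: supp_inX; exists a, 0%MM; by rewrite add0m.
Qed.

Section Mono.
Variable I : S -> Prop.
Hypothesis HI : monomial_ideal I.

Lemma I_D a b : I a -> I b -> I (a + b).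
Proof. case: HI => M0 H; rewrite !H; exact: igD. Qed.
Lemma I_M r a : I a -> I (r * a).
Proof. case: HI => M0 H; rewrite !H; exact: igM. Qed.
Lemma I_0 : I 0.
Proof. case: HI => M0 H; rewrite !H; exact: ig0. Qed.

Lemma I_T p : I p -> supp_in (fun m => I 'X_[m]) p.
Proof.
case: HI => M0 H; rewrite H => /ig_mono_supp Hs m /Hs [a [b [Ha ->]]].
rewrite H mpolyXD; apply: igM; apply: igG; by exists a.
Qed.

Definition A (a : M) := I 'X_[a].

Fixpoint E (k : nat) (m : M) : Prop :=
  match k with
  | 0 => True
  | k'.+1 => exists a m', [/\ A a, E k' m' & m = (m' + a)%MM]
  end.

Lemma E_upc k : upc (E k).
Proof.
case: k => [//|k] m b [a [m' [Ha Hm ->]]].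
exists a, (b + m')%MM; split => //; last by rewrite addmA.
elim: k m' Hm {Ha} => [//|k IH] m' [a' [m'' [Ha' Hm'' ->]]].
by exists a', (b + m'')%MM; split => //; [apply: IH|rewrite addmA].
Qed.

Lemma E_mono k u m : A u -> E k m -> E k.+1 (m + u)%MM.
Proof. by move=> Au Em; exists u, m. Qed.

Lemma E_add1 k m1 m2 : E 1 m1 -> E k m2 -> E k.+1 (m1 + m2)%MM.
Proof.
move=> [a [m'' [Ha _ ->]]] H2; exists a, (m'' + m2)%MM; split => //.
  exact: (@E_upc k m2 m'' H2).
by rewrite -!addmA [(a + m2)%MM]addmC.
Qed.

Lemma E_deg al k m : (forall a, A a -> al <= mdeg a)%N -> E k m -> (k * al <= mdeg m)%N.
Proof.
move=> Hal; elim: k m => [//|k IH] m [a [m' [Ha Hm ->]]].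
by rewrite mdegD mulSn addnC leq_add // ?IH // Hal.
Qed.

Lemma J1 k m : E k m -> ideal_pow I k 'X_[m].
Proof.
move=> Em.
suff: exists b s, [/\ size s = k, {in s, forall x, I x} & 'X_[m] = 'X_[b] * \prod_(x <- s) x].
  move=> [b [s [h1 h2 ->]]]; apply: igM; apply: igG; by exists s.
elim: k m Em => [|k IH] m.
  by move=> _; exists m, [::]; rewrite big_nil mulr1.
move=> [a [m' [Ha Hm ->]]]; have [b [s [h1 h2 h3]]] := IH _ Hm.
exists b, ('X_[a] :: s); split; first by rewrite /= h1.
  by move=> x; rewrite inE => /orP [/eqP ->|/h2].
rewrite big_cons mpolyXD h3 -mulrA [_ * 'X_[a]]mulrC mulrA. by [].
Qed.

Lemma J2 k p : ideal_pow I k p -> supp_in (E k) p.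
Proof.
apply: supp_in_ig; first exact: E_upc.
move=> g [s [<- Hs ->]] {k}.
elim: s Hs => [|x s IH] Hs.
  by rewrite big_nil => m; rewrite -mpolyC1 msupp1 inE.
rewrite big_cons /=; apply: (@supp_inM (E 1) (E (size s))).
- by move=> m1 m2; apply: E_add1.
- move=> m /(I_T (Hs x (mem_head _ _))) Hm; exists m, 0%MM; split => //.
  by rewrite add0m.
- by apply: IH => y ys; apply: Hs; rewrite inE ys orbT.
Qed.

End Mono.

Section Greedy.
Variable L : M -> Prop.
Hypothesis upcL : upc L.
Hypothesis L0 : ~ L 0%MM.

Let Q w := forall m, L (m + w)%MM -> exists i, L (w + U_(i))%MM /\ (0 < m i)%N.
Let SS w := [set i : 'I_t | asb (L (w + U_(i))%MM)].

Lemma inSS w i : (i \in SS w) <-> L (w + U_(i))%MM.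
Proof. by rewrite inE; split => /asbP. Qed.

Lemma greedy_step w : ~ L w -> ~ Q w -> exists w', ~ L w' /\ (#|SS w| < #|SS w'|)%N.
Proof.
move=> nLw nQ.
have ex1 : exists m, L (m + w)%MM /\ forall i, L (w + U_(i))%MM -> m i = 0%N.
  apply: NNPP => H; apply: nQ => m Lm; apply: NNPP => H2; apply: H; exists m.
  split => // i Li; apply/eqP; rewrite -leqn0 leqNgt; apply/negP => hp.
  by apply: H2; exists i.
pose Pd d := asb (exists m, mdeg m = d /\ L (m + w)%MM /\ forall i, L (w + U_(i))%MM -> m i = 0%N).
have exd : exists d, Pd d.
  by case: ex1 => m Hm; exists (mdeg m); apply/asbP; exists m.
case: (ex_minnP exd) => d0 /asbP [m0 [Hd0 [Lm0 Hm0]]] Hmin.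
have [j Hj] : exists j, (0 < m0 j)%N.
  apply: NNPP => H; apply: nLw; suff E0 : m0 = 0%MM by move: Lm0; rewrite E0 add0m.
  apply/mnmP => i; rewrite mnm0E; apply/eqP; rewrite -leqn0 leqNgt; apply/negP => hp.
  by apply: H; exists i.
have Ej : (m0 - U_(j) + U_(j))%MM = m0 by apply: submK; rewrite lep1mP -lt0n.
exists (w + (m0 - U_(j)))%MM; split.
  move=> Lw'.
  have : Pd (mdeg (m0 - U_(j))%MM).
    apply/asbP; exists (m0 - U_(j))%MM; split => //; split; first by rewrite addmC.
    by move=> i /Hm0 hi; rewrite mnmBE hi.
  move/Hmin; rewrite -Hd0 -{1}Ej mdegD mdeg1 addn1 ltnn //.
apply: proper_card; apply/properP; split.
  apply/subsetP => i /inSS Li; apply/inSS.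
  have -> : (w + (m0 - U_(j)) + U_(i) = (m0 - U_(j)) + (w + U_(i)))%MM.
    by rewrite addmA [(w + _)%MM]addmC.
  exact: upcL.
exists j.
  apply/inSS; rewrite -addmA Ej addmC //.
by apply/negP => /inSS /Hm0 h; rewrite h in Hj.
Qed.

Lemma greedy : exists w, ~ L w /\ Q w.
Proof.
suff H : forall k w, ~ L w -> (t - #|SS w| <= k)%N -> exists w, ~ L w /\ Q w.
  by apply: (H t 0%MM L0); rewrite leq_subr.
elim => [|k IH] w nLw hk; (case: (classic (Q w)) => hQ; first by exists w);
  have [w' [nLw' hc]] := greedy_step nLw hQ.
  have h : (#|SS w'| <= t)%N by rewrite -[X in (_ <= X)%N]card_ord max_card.
  by exfalso; move: hk hc h; clear; lia.
apply: (IH w') => //; have h : (#|SS w'| <= t)%N by rewrite -[X in (_ <= X)%N]card_ord max_card.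
by move: hk hc h; clear; lia.
Qed.
End Greedy.


Lemma prime_supp (Pm : M -> Prop) : upc Pm ->
  (forall m1 m2, ~ Pm m1 -> ~ Pm m2 -> ~ Pm (m1 + m2)%MM) -> ~ Pm 0%MM ->
  prime_ideal (supp_in Pm).
Proof.
move=> hu hn h0; split.
- split; [exact: supp_in0|exact: supp_inD|by move=> r a; apply: supp_inMl].
- by move=> H; apply: h0; apply: H; rewrite -mpolyC1 msupp1 mem_head.
move=> a b Hab; case: (classic (supp_in Pm a)) => Ha; first by left.
case: (classic (supp_in Pm b)) => Hb; first by right.
exfalso.
pose proj (p : S) : S := \sum_(m <- msupp p | asb (~ Pm m)) p@_m *: 'X_[m].
pose rest (p : S) : S := \sum_(m <- msupp p | ~~ asb (~ Pm m)) p@_m *: 'X_[m].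
have Ep (p : S) : p = proj p + rest p by rewrite {1}[p]mpolyE (bigID (fun m => asb (~ Pm m))).
have Hproj (p : S) : supp_in (fun m => ~ Pm m) (proj p).
  apply: supp_in_sum => x /asbP hx; apply: supp_inZ; exact: supp_inX.
have Hrest (p : S) : supp_in Pm (rest p).
  apply: supp_in_sum => x /negP hx; apply: supp_inZ; apply: supp_inX.
  by apply: NNPP => H; apply: hx; apply/asbP.
have Hnz (p : S) : ~ supp_in Pm p -> proj p != 0.
  move=> Hp; apply/negP => /eqP H0; apply: Hp; rewrite (Ep p) H0 add0r; exact: Hrest.
have Hc : supp_in Pm (proj a * proj b).
  have -> : proj a * proj b = a * b - (rest a * b + proj a * rest b).
    have -> : a * b = (proj a + rest a) * (proj b + rest b) by rewrite -!Ep.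
    have key : forall x y z w : S, x * z = (x + y) * (z + w) - (y * (z + w) + x * w) by move=> x y z w; ring.
    rewrite [X in rest a * X](Ep b); exact: key.
  apply: supp_inD => //; apply: supp_inN; apply: supp_inD.
    by rewrite mulrC; apply: supp_inMl.
  by apply: supp_inMl.
have Hc' : supp_in (fun m => ~ Pm m) (proj a * proj b).
  by apply: (supp_inM (E1 := fun m => ~ Pm m) (E2 := fun m => ~ Pm m)) => // m1 m2; apply: hn.
have : proj a * proj b != 0 by rewrite mulf_neq0 // Hnz.
rewrite -msupp_eq0; case E0: (msupp _) => [//|m s] _.
have mi : m \in msupp (proj a * proj b) by rewrite E0 mem_head.
by apply: (Hc' _ mi); apply: Hc.
Qed.


Lemma ig_sum_seq G (T : eqType) (s : seq T) (F : T -> S) :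
  (forall x, x \in s -> ideal_gen G (F x)) -> ideal_gen G (\sum_(x <- s) F x).
Proof.
elim: s => [|x s IH] H; first by rewrite big_nil; apply: ig0.
rewrite big_cons; apply: igD; first by apply: H; rewrite mem_head.
by apply: IH => y ys; apply: H; rewrite inE ys orbT.
Qed.

End S.

Theorem theorem4p7 (K : fieldType) (t : nat) (I : {mpoly K[t]} -> Prop) :
  monomial_ideal I ->
  (exists f, I f /\ f != 0) ->
  ~ I 1 ->
  exists n0 d : nat, [/\ (0 < n0)%N, (0 < d)%N &
    forall n : nat, (n0 <= n)%N ->
      (v_number (ideal_pow I n.+1) <= n * alpha I + d)%N].
Proof.
move=> HI [f [If fnz]] nI1.
pose PA := fun k => exists f : {mpoly K[t]}, [/\ I f, f != 0 & f \is k.-homog].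
have XI m : I 'X_[m] -> PA (mdeg m).
  move=> Im; exists 'X_[m]; split => //; last by rewrite dhomogX.
  apply/eqP => h; have := msuppX K m; rewrite h -mpolyC0 msupp0 //.
have [m1 m1f] : exists m, m \in msupp f.
  move: fnz; rewrite -msupp_eq0; case: (msupp f) => [//|m s] _; exists m; exact: mem_head.
have [[f0 [If0 f0nz f0h]] _] := @min_natP PA _ (XI _ (I_T HI If m1f)).
have al_low a : A I a -> (alpha I <= mdeg a)%N.
  by move=> Aa; apply: (proj2 (@min_natP PA _ (XI _ Aa))).
set al := alpha I in f0h al_low *.
have [u uf0] : exists m, m \in msupp f0.
  move: f0nz; rewrite -msupp_eq0; case: (msupp f0) => [//|m s] _; exists m; exact: mem_head.
have Au : A I u by apply: (I_T HI If0).
have du : mdeg u = al by apply: (dhomog_mf f0h).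
have al0 : (0 < al)%N.
  rewrite lt0n -du mdeg_eq0; apply/negP => /eqP u0; apply: nI1.
  by move: Au; rewrite /A u0 mpolyX0.
pose L := fun m => exists n, E I n.+1 (m + u *+ n)%MM.
have upcL : upc L.
  move=> m b [n Hn]; exists n; rewrite -addmA; exact: E_upc.
have L0 : ~ L 0%MM.
  move=> [n]; rewrite add0m => /(E_deg al_low); rewrite mdegMn du.
  by move: al0; clear; nia.
have [w [nLw Qw]] := greedy upcL L0.
pose Pm := fun m : 'X_{1..t} => exists i, L (w + U_(i))%MM /\ (0 < m i)%N.
have Lmono x n n' : (n <= n')%N -> E I n.+1 (x + u *+ n)%MM -> E I n'.+1 (x + u *+ n')%MM.
  elim: n' => [|n' IH]; first by rewrite leqn0 => /eqP ->.
  rewrite leq_eqVlt => /orP [/eqP -> //|]; rewrite ltnS => /IH H /H.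
  by move/(E_mono Au); rewrite mulmSr addmA.
have [N HN] : exists N, forall i, L (w + U_(i))%MM -> forall n, (N <= n)%N ->
    E I n.+1 ((w + U_(i)) + u *+ n)%MM.
  suff [N HN] : exists N, forall i, i \in enum 'I_t -> L (w + U_(i))%MM ->
      forall n, (N <= n)%N -> E I n.+1 ((w + U_(i)) + u *+ n)%MM.
    by exists N => i; apply: HN; rewrite mem_enum.
  elim: (enum 'I_t) => [|i s [N HN]]; first by exists 0%N.
  case: (classic (L (w + U_(i))%MM)) => [[ni Hni]|nL].
    exists (maxn N ni) => j; rewrite inE => /orP [/eqP -> _|js Lj] n hn.
      by apply: (Lmono _ ni) => //; apply: leq_trans hn; apply: leq_maxr.
    by apply: HN => //; apply: leq_trans hn; apply: leq_maxl.
  exists N => j; rewrite inE => /orP [/eqP -> //|js]; exact: HN.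
exists N.+1, (mdeg w).+1; split => // n hn.
pose fm := (u *+ n + w)%MM.
have Hcol x : ideal_pow I n.+1 (x * 'X_[fm]) <-> supp_in Pm x.
  split.
    move=> Hx m mx.
    have : (fm + m)%MM \in msupp (x * 'X_[fm]).
      by rewrite mcoeff_msupp mcoeffMX -mcoeff_msupp.
    move/(J2 HI Hx) => Ef; apply: Qw; exists n.
    have eq : ((u *+ n + w) + m = (m + w) + u *+ n)%MM.
      by rewrite addmC [(u *+ n + w)%MM]addmC addmA.
    by rewrite -eq.
  move=> Hx; rewrite (mpolyE x) big_distrl; apply: ig_sum_seq => m mx /=.
  rewrite -mul_mpolyC -mulrA -mpolyXD; apply: igM; apply: J1.
  have [i [Li mi]] := Hx m mx.
  have Em : (m - U_(i) + U_(i))%MM = m by apply: submK; rewrite lep1mP -lt0n.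
  have := HN i Li n (ltnW hn) => /(E_upc (m - U_(i))%MM).
  have eq : (m + fm = (m - U_(i)) + ((w + U_(i)) + u *+ n))%MM.
    by rewrite /fm -{1}Em; apply/mnmP => j; rewrite !mnmDE; lia.
  by rewrite eq.
have Hw : (fun k => exists f0 : {mpoly K[t]}, f0 \is k.-homog /\
   exists P, Ass (ideal_pow I n.+1) P /\ forall x, colon (ideal_pow I n.+1) f0 x <-> P x) (mdeg fm).
  exists 'X_[fm]; split; first by rewrite dhomogX.
  exists (supp_in Pm); split => //; split.
    apply: prime_supp.
    - by move=> m b [i [Li hi]]; exists i; split => //; rewrite mnmDE ltn_addl.
    - move=> a b na nb [i [Li hi]]; move: hi; rewrite mnmDE.
      case: (posnP (a i)) => ha; last by exfalso; apply: na; exists i.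
      case: (posnP (b i)) => hb; last by exfalso; apply: nb; exists i.
      by rewrite ha hb.
    - by move=> [i [_]]; rewrite mnm0E.
  by exists 'X_[fm] => x; rewrite /colon Hcol.
apply: leq_trans (proj2 (min_natP Hw)) _.
by rewrite /fm mdegD mdegMn du mulnC leq_add2l.
Qed.
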